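(* There is a universal constant $\alpha>1$ such that the following holds. Let $p\ge 2$ and $k\ge1$ be integers and put $r=r(p,k)=\alpha\, p\log(pk)$. Let $n\ge 1$ and let $S_1,\dots,S_\ell\subseteq[n]$ be a sequence of sets, each of size $k$, with $\ell> r^k$, which is $r$-spread. Then there are $p$ distinct indices $i_1,\dots,i_p\in[\ell]$ such that $S_{i_1},\dots,S_{i_p}$ are pairwise disjoint.
   Context: A sequence (repetitions allowed) of sets $S_1,\dots,S_\ell\subseteq[n]$, each of size $k$, is called $r$-spread if for every non-empty set $Z\subseteq[n]$, the number of indices $i\in[\ell]$ with $Z\subseteq S_i$ is at most $r^{k-|Z|}$. All logarithms are base $2$. *)

(* Defs.v *)
From mathcomp Require Import all_boot.
From Stdlib Require Import Reals.

Set Implicit Arguments.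
Unset Strict Implicit.
Unset Printing Implicit Defensive.

Definition log2 (x : R) : R := (ln x / ln 2)%R.

Definition spread (n ell k : nat) (r : R) (S : 'I_ell -> {set 'I_n}) : Prop :=
  forall Z : {set 'I_n}, Z != set0 ->
    (INR #|[set i | Z \subset S i]| <= r ^ (k - #|Z|))%R.

(* Main.v *)
Require Import Defs.
From Stdlib Require Import Reals Lra.
From mathcomp Require Import all_boot zify.

Set Implicit Arguments.
Unset Strict Implicit.
Unset Printing Implicit Defensive.


Section Frag.
Variables (n ell : nat) (S : 'I_ell -> {set 'I_n}) (k : nat).

Definition famT := 'I_ell -> option {set 'I_n}.

Definition firstS (G : famT) (X : {set 'I_n}) : {set 'I_n} :=
  head set0 (filter (fun A : {set 'I_n} => A \subset X) (pmap G (enum 'I_ell))).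

Definition fragS (G : famT) W A := firstS G (W :|: A) :\: W.

Definition step (s : nat) (W : {set 'I_n}) (G : famT) : famT :=
  fun i => if G i is Some A then
     (if #|fragS G W A| <= s then Some (fragS G W A) else None) else None.

Fixpoint Gs (Wf : nat -> {set 'I_n}) (j : nat) : famT :=
  if j is j'.+1 then step (k %/ 2 ^ j) (Wf j') (Gs Wf j') else fun i => Some (S i).

Lemma firstS_sub G (X : {set 'I_n}) : firstS G X \subset X.
Proof.
rewrite /firstS; have := filter_all (fun A : {set 'I_n} => A \subset X) (pmap G (enum 'I_ell)).
case: (filter _ _) => [|a s] /=; first by rewrite sub0set.
by case/andP.
Qed.

Lemma eq_firstS G G' (X : {set 'I_n}) : G =1 G' -> firstS G X = firstS G' X.
Proof. by move=> H; rewrite /firstS (eq_pmap H). Qed.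

Lemma head_filter_mono (T : eqType) (d : T) (P P' : pred T) s :
  (forall a, P' a -> P a) -> P' (head d (filter P s)) -> P' d ->
  head d (filter P' s) = head d (filter P s).
Proof.
move=> HP. elim: s => [|a s IH] //=.
case Pa: (P a) => /=.
  by move=> ->.
case P'a: (P' a) => /=; first by move: (HP _ P'a); rewrite Pa.
by move=> H1 H2; rewrite IH.
Qed.

Lemma firstS_mono G (X X' : {set 'I_n}) : X' \subset X -> firstS G X \subset X' ->
  firstS G X' = firstS G X.
Proof.
move=> sX H; apply: head_filter_mono => //; last by rewrite sub0set.
by move=> a /= h; apply: subset_trans h sX.
Qed.

Lemma firstS_in G (X : {set 'I_n}) : firstS G X = set0 \/ exists i, G i = Some (firstS G X).
Proof.
rewrite /firstS.
case E: (filter _ _) => [|a s] /=; first by left.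
right; have : a \in filter (fun A : {set 'I_n} => A \subset X) (pmap G (enum 'I_ell)) by rewrite E mem_head.
rewrite mem_filter => /andP [_]; rewrite mem_pmap => /mapP [i _ Hi].
by exists i.
Qed.

Lemma firstS_wit (G : famT) (X : {set 'I_n}) i (A : {set 'I_n}) : G i = Some A -> A \subset X ->
  exists i', G i' = Some (firstS G X).
Proof.
move=> Hi HA; rewrite /firstS.
have : A \in filter (fun A : {set 'I_n} => A \subset X) (pmap G (enum 'I_ell)).
  by rewrite mem_filter HA mem_pmap; apply/mapP; exists i; rewrite ?mem_enum.
case E: (filter _ _) => [|a s] //= _.
have : a \in filter (fun A : {set 'I_n} => A \subset X) (pmap G (enum 'I_ell)) by rewrite E mem_head.
rewrite mem_filter => /andP [_]; rewrite mem_pmap => /mapP [i' _ Hi'].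
by exists i'.
Qed.

Lemma fragS_sub G (W A : {set 'I_n}) : fragS G W A \subset A.
Proof.
apply/subsetP => x; rewrite /fragS inE => /andP [xW xF].
have := subsetP (firstS_sub G (W :|: A)) x xF; rewrite inE.
by rewrite (negbTE xW).
Qed.

Lemma eq_step s W G G' : G =1 G' -> step s W G =1 step s W G'.
Proof.
move=> H i; rewrite /step H; case: (G' i) => // A; rewrite /fragS (eq_firstS _ H) //.
Qed.

Lemma eq_Gs Wf Wf' j : (forall j', j' < j -> Wf j' = Wf' j') -> Gs Wf j =1 Gs Wf' j.
Proof.
elim: j => [|j IH] H //=.
rewrite H //; apply: eq_step; apply: IH => j' hj; apply: H; lia.
Qed.

Hypothesis Ssize : forall i, #|S i| = k.

Lemma Gs_inv Wf j i A : Gs Wf j i = Some A ->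
  [/\ A \subset S i, #|A| <= k %/ 2 ^ j &
      forall j', j' < j -> [disjoint A & Wf j']].
Proof.
elim: j i A => [|j IH] i A /=.
  by case=> <-; rewrite ?expn0 ?divn1 Ssize; split.
rewrite /step; case E: (Gs Wf j i) => [B|] //.
case: ifP => // hs [<-].
have [h1 h2 h3] := IH _ _ E.
have sub := fragS_sub (Gs Wf j) (Wf j) B.
split => //.
  exact: subset_trans sub h1.
move=> j' hj'; case: (ltngtP j' j) => hj.
- by apply: disjointWl sub (h3 _ hj).
- lia.
- subst j'. rewrite /fragS disjoints_subset; apply/subsetP => x.
  by rewrite !inE => /andP [].

Qed.

Lemma Gs_succ Wf j i A : Gs Wf j i = Some A ->
  exists i', forall x, x \in S i' -> x \in A \/ exists j', j' < j /\ x \in Wf j'.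
Proof.
elim: j i A => [|j IH] i A /=.
  by case=> <-; exists i => x; left.
rewrite /step; case E: (Gs Wf j i) => [B|] //.
case: ifP => // hs [<-].
have [i2 Hi2] := firstS_wit (X:=Wf j :|: B) E (subsetUr _ _).
have [i' Hi'] := IH _ _ Hi2.
exists i' => x /Hi' [xF|[j' [hj xW]]].
  case xW: (x \in Wf j).
    by right; exists j; split.
  by left; rewrite /fragS inE xW.
by right; exists j'; split => //; lia.
Qed.
End Frag.


Lemma card_pairE (A B : finType) (P : pred (A * B)) :
  #|[set v | P v]| = \sum_(a : A) #|[set b | P (a, b)]|.
Proof.
rewrite -sum1dep_card (eq_bigl (fun v => xpredT v.1 && P (v.1, v.2))); last by case.
rewrite -(pair_big_dep xpredT (fun a b => P (a, b)) (fun _ _ => 1)).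
by apply: eq_bigr => a _; rewrite sum1dep_card.
Qed.

Section Count.
Variables (n ell : nat) (S : 'I_ell -> {set 'I_n}) (k : nat).
Hypothesis Ssize : forall i, #|S i| = k.
Variables (m L : nat) (c : 'I_m).

Notation col := ('I_m * 'I_L)%type.
Notation colg := {ffun 'I_n -> col}.

Definition Wc (chi : colg) : nat -> {set 'I_n} :=
  fun j => [set x | ((chi x).1 == c) && ((chi x).2 == j :> nat)].
Definition Gc chi j := Gs S k (Wc chi) j.
Definition fr j chi i :=
  if Gc chi j i is Some A then fragS (Gc chi j) (Wc chi j) A else set0.
Definition Bad j t chi i := (Gc chi j i != None) && (#|fr j chi i| == t).
Definition Tof j chi := firstS (Gc chi j) (Wc chi j).
Definition cnt (D : {set 'I_n}) := #|[set i | D \subset S i]|.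
Definition Ct t := \max_(D : {set 'I_n} | (#|D| == t) && (D != set0)) cnt D.

Lemma Tof_size j chi : #|Tof j chi| <= k %/ 2 ^ j.
Proof.
rewrite /Tof; case: (firstS_in (Gc chi j) (Wc chi j)) => [->|[i Hi]].
  by rewrite cards0.
by have [_ h _] := Gs_inv Ssize Hi.
Qed.

Section Round.
Variable jo : 'I_L.
Let j : nat := jo.
Let c0 : col := (c, jo).

Definition recol chi i : colg := [ffun x => if x \in fr j chi i then c0 else chi x].
Definition restr chi i : colg := [ffun x => if x \in fr j chi i then chi x else c0].
Definition enc (u : colg * 'I_ell) : colg * ({set 'I_n} * (colg * 'I_ell)) :=
  (recol u.1 u.2, (fr j u.1 u.2, (restr u.1 u.2, u.2))).

Lemma enc_inj : injective enc.
Proof.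
move=> [chi i] [chi' i']; rewrite /enc /= => E; case: E => /ffunP H1 HD /ffunP H2 Hi.
subst i'; congr (_, _); apply/ffunP => x.
have := H1 x; have := H2 x; rewrite !ffunE -HD.
by case: (x \in fr j chi i) => [-> | _ ->].
Qed.

Lemma bad_prop chi i t : Bad j t chi i ->
  [/\ fr j chi i \subset Tof j (recol chi i), #|fr j chi i| == t,
      restr chi i \in pffun_on c0 (fr j chi i) (setT : {set col}) &
      fr j chi i \subset S i].
Proof.
rewrite /Bad /fr; case E: (Gc chi j i) => [A|] //= ht.
set D := fragS _ _ A.
have [hA1 _ hA3] := Gs_inv Ssize E.
have DA : D \subset A by apply: fragS_sub.
have DF : fragS (Gc chi j) (Wc chi j) A = D by [].
have DTW : D = firstS (Gc chi j) (Wc chi j :|: A) :\: Wc chi j by [].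
clearbody D. rewrite DF in ht.
have eqW : forall j', j' < j -> Wc (recol chi i) j' = Wc chi j'.
  move=> j' hj; apply/setP => x.
  case xD: (x \in D).
    have nW : (x \in Wc chi j') = false.
      by apply: (disjointFr (hA3 j' hj)); apply: (subsetP DA).
    rewrite nW /Wc inE /recol /fr E DF ffunE xD /c0 /=.
    apply/negbTE; rewrite negb_and; apply/orP; right.
    rewrite /j in hj; apply/eqP => e; lia.
  by rewrite /Wc !inE /recol /fr E DF ffunE xD.
have eqG : Gc (recol chi i) j =1 Gc chi j by apply: eq_Gs.
have eqWj : Wc (recol chi i) j = Wc chi j :|: D.
  apply/setP => x; rewrite in_setU /recol /fr E DF; rewrite /Wc !inE ffunE.
  case: (x \in D) => /=; last by rewrite ?orbF.
  by rewrite /c0 /= !eqxx orbT.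
have HT : Tof j (recol chi i) = firstS (Gc chi j) (Wc chi j :|: A).
  rewrite /Tof eqWj (eq_firstS _ eqG); apply: firstS_mono.
    by apply: setUS.
  apply/subsetP => x xF; rewrite inE.
  by case xW: (x \in Wc chi j) => //=; rewrite DTW inE xW.
split => //.
- rewrite HT DTW; apply: subsetDl.
- apply/pffun_onP; split.
    apply/subsetP => x; rewrite /restr /fr E DF inE ffunE.
    by case: (x \in D) => //; rewrite eqxx.
  by move=> y _; rewrite inE.
- exact: subset_trans DA hA1.
Qed.

Definition Cod t := [set v : colg * ({set 'I_n} * (colg * 'I_ell)) |
  [&& v.2.1 \subset Tof j v.1, #|v.2.1| == t,
      v.2.2.1 \in pffun_on c0 v.2.1 (setT : {set col}) & v.2.1 \subset S v.2.2.2]].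

Lemma count_bad t : 0 < t ->
  \sum_(chi : colg) #|[set i | Bad j t chi i]| <=
    #|colg| * (2 ^ (k %/ 2 ^ j) * (#|{: col}| ^ t * Ct t)).
Proof.
move=> t0.
rewrite -(card_pairE (fun u => Bad j t u.1 u.2)).
rewrite -(card_imset _ enc_inj).
apply: (leq_trans (subset_leq_card (_ : _ \subset Cod t))).
  apply/subsetP => v /imsetP [u]; rewrite inE => hb ->.
  have [h1 h2 h3 h4] := bad_prop hb.
  by rewrite inE /= h1 h2 h3 h4.
rewrite card_pairE -sum_nat_const; apply: leq_sum => chi' _.
rewrite card_pairE.
apply: (@leq_trans (\sum_(D : {set 'I_n}) if D \in powerset (Tof j chi')
   then #|{: col}| ^ t * Ct t else 0)); last first.
  rewrite -big_mkcond sum_nat_const card_powerset leq_mul2r.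
  by rewrite leq_exp2l ?Tof_size ?orbT.
apply: leq_sum => D _.
rewrite card_pairE.
case hD: (D \in powerset (Tof j chi')); last first.
  rewrite big1 // => g _; apply/eqP; rewrite cards_eq0; apply/eqP/setP => i.
  by rewrite !inE /=; move: hD; rewrite inE => ->.
case hDt: (#|D| == t); last first.
  rewrite big1 // => g _; apply/eqP; rewrite cards_eq0; apply/eqP/setP => i.
  by rewrite !inE /= ?andbF.
rewrite -cardsT -(eqP hDt) -(card_pffun_on c0 D (setT : {set col})) -sum_nat_const.
rewrite [X in _ <= X]big_mkcond /=; apply: leq_sum => g _.
case: ifP => hg; last first.
  rewrite leqn0 cards_eq0; apply/eqP/setP => i.
  by rewrite !inE /= ?hg ?andbF.
apply: (@leq_trans (cnt D)).
  apply: subset_leq_card; apply/subsetP => i; rewrite !inE /=. by case/andP.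
rewrite /Ct; apply: (leq_bigmax_cond (P := fun D' : {set 'I_n} => (#|D'| == #|D|) && (D' != set0)) (F := cnt)).
rewrite eqxx /=; apply/eqP => e; move: hDt; rewrite e cards0 => /eqP et; lia.
Qed.
End Round.

Definition sz j := k %/ 2 ^ j.
Definition dead J chi := #|[set i | Gc chi J i == None]|.
Definition dies j chi := #|[set i | (Gc chi j i != None) && (Gc chi j.+1 i == None)]|.

Lemma dead_le J chi : dead J chi <= \sum_(j < J) dies j chi.
Proof.
elim: J => [|J IH].
  rewrite big_ord0 leqn0 cards_eq0; apply/eqP/setP => i; by rewrite !inE.
rewrite big_ord_recr /=.
apply: (leq_trans _ (leq_add IH (leqnn _))).
apply: (@leq_trans #|[set i | Gc chi J i == None] :|: [set i | (Gc chi J i != None) && (Gc chi J.+1 i == None)]|).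
  apply: subset_leq_card; apply/subsetP => i; rewrite !inE => h.
  by case: (Gc chi J i) => //=.
by rewrite cardsU leq_subr.
Qed.

Lemma sum_ind_ge1 (P : nat -> bool) a b t0 : a <= t0 < b -> P t0 ->
  1 <= \sum_(a <= t < b) (if P t then 1 else 0).
Proof.
move=> ht Pt.
rewrite (bigD1_seq t0) ?mem_index_iota ?iota_uniq //= Pt.
by rewrite leq_addr.
Qed.

Lemma dies_le j chi : dies j chi <=
   \sum_((sz j.+1).+1 <= t < (sz j).+1) #|[set i | Bad j t chi i]|.
Proof.
rewrite /dies -sum1dep_card big_mkcond /=.
rewrite (eq_bigr (fun t => \sum_i (if Bad j t chi i then 1 else 0))); last first.
  by move=> t _; rewrite -sum1dep_card big_mkcond.
rewrite exchange_big /=; apply: leq_sum => i _.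
case: ifP => // /andP [].
case E: (Gc chi j i) => [A|] // _ /=.
rewrite {1}/Gc /= /step -/(Gc chi j) E.
case: ifP => // hs _.
apply: (@sum_ind_ge1 (fun t => Bad j t chi i) _ _ #|fr j chi i|).
  rewrite /fr E; apply/andP; split; first by rewrite ltnNge hs.
  have [_ hA _] := Gs_inv Ssize E.
  rewrite ltnS; apply: leq_trans hA.
  by apply: subset_leq_card; apply: fragS_sub.
by rewrite /Bad E eqxx.
Qed.

Definition Fb t := #|{: colg}| * (4 ^ t * (#|{: col}| ^ t * Ct t)).

Lemma sum_dies j : j < L -> \sum_(chi : colg) dies j chi <=
   \sum_((sz j.+1).+1 <= t < (sz j).+1) Fb t.
Proof.
move=> hj.
apply: (@leq_trans (\sum_(chi : colg) \sum_((sz j.+1).+1 <= t < (sz j).+1) #|[set i | Bad j t chi i]|)).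
  by apply: leq_sum => chi _; apply: dies_le.
rewrite exchange_big /=.
rewrite big_nat [X in _ <= X]big_nat; apply: leq_sum => t /andP [ht1 ht2].
apply: (leq_trans (count_bad (Ordinal hj) _)); first by lia.
rewrite /Fb leq_mul2l; apply/orP; right.
rewrite leq_mul2r; apply/orP; right.
have -> : 4 = 2 ^ 2 by [].
rewrite -expnM; apply: leq_pexp2l => //=.
have e : sz j.+1 = sz j %/ 2 by rewrite /sz expnSr divnMA.
move: ht1; rewrite e -/(sz j).
have := divn_eq (sz j) 2; have := ltn_pmod (sz j) (isT : 0 < 2).
rewrite /sz; lia.
Qed.

Lemma telescope (s : nat -> nat) (F : nat -> nat) J :
  (forall j, s j.+1 <= s j) ->
  \sum_(j < J) \sum_((s j.+1).+1 <= t < (s j).+1) F t =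
  \sum_((s J).+1 <= t < (s 0).+1) F t.
Proof.
move=> hs; elim: J => [|J IH]; first by rewrite big_ord0 big_geq.
rewrite big_ord_recr /= IH addnC -big_cat_nat //.
  by rewrite ltnS.
rewrite ltnS; elim: J {IH} => // J IH; exact: leq_trans (hs _) IH.
Qed.

Lemma sum_dead : k < 2 ^ L ->
  \sum_(chi : colg) dead L chi <= \sum_(1 <= t < k.+1) Fb t.
Proof.
move=> hk.
apply: (@leq_trans (\sum_(chi : colg) \sum_(j < L) dies j chi)).
  by apply: leq_sum => chi _; apply: dead_le.
rewrite exchange_big /=.
apply: (@leq_trans (\sum_(j < L) \sum_((sz j.+1).+1 <= t < (sz j).+1) Fb t)).
  by apply: leq_sum => j _; apply: sum_dies.
rewrite (telescope (s := sz)).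
  by rewrite /sz divn_small // expn0 divn1.
by move=> j; rewrite /sz expnSr divnMA leq_div.
Qed.

Definition fail chi := [forall i, Gc chi L i == None].

Lemma sum_fail : \sum_(chi : colg) (fail chi) * ell <= \sum_(chi : colg) dead L chi.
Proof.
apply: leq_sum => chi _; case F: (fail chi); last by rewrite mul0n.
rewrite mul1n /dead; move/forallP: F => F.
rewrite -[X in X <= _](card_ord ell); apply: subset_leq_card.
by apply/subsetP => i _; rewrite inE F.
Qed.
End Count.


Section Reals.
Local Open Scope R_scope.

Fixpoint rs (G : nat -> R) (K : nat) : R :=
  match K with 0 => 0 | K'.+1 => (rs G K' + G K'.+1) end.

Lemma INR_sum_le (F : nat -> nat) (G : nat -> R) K :
  (forall t, (1 <= t <= K)%N -> (INR (F t) <= G t)) ->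
  (INR (\sum_(1 <= t < K.+1) F t)%N <= rs G K).
Proof.
elim: K => [|K IH] H.
  by rewrite big_geq //=; lra.
rewrite big_nat_recr //= plus_INR.
apply: Rplus_le_compat.
  by apply: IH => t ht; apply: H; lia.
by apply: H; lia.
Qed.

Lemma rs_le (G G' : nat -> R) K : (forall t, (1 <= t <= K)%N -> (G t <= G' t)) ->
  (rs G K <= rs G' K).
Proof.
elim: K => [|K IH] H /=; first lra.
apply: Rplus_le_compat; last by apply: H; lia.
by apply: IH => t ht; apply: H; lia.
Qed.

Lemma rs_geo (y : R) K : (0 <= y <= /2) -> (rs (fun t => y ^ t) K <= 2 * y - 2 * y ^ K.+1).
Proof.
move=> hy; elim: K => [|K IH]; first by simpl; lra.
have h1 : 0 <= y ^ K.+1 by apply: pow_le; lra.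
change (rs (fun t => y^t) K + y ^ K.+1 <= 2*y - 2*(y * y^K.+1)).
nra.
Qed.

Lemma rs_scale (a : R) G K : rs (fun t => a * G t) K = (a * rs G K).
Proof. elim: K => [|K IH] /=; [lra | rewrite IH; lra]. Qed.

Lemma ln_le' x y : (0 < x) -> (x <= y) -> (ln x <= ln y).
Proof.
move=> hx hxy; case: (Rle_lt_or_eq_dec _ _ hxy) => h.
  by apply: Rlt_le; apply: ln_increasing.
by rewrite h; lra.
Qed.

Lemma ln2_pos : (0 < ln 2).
Proof. have := ln_lt_2; lra. Qed.

Lemma INR_muln (a b : nat) : INR (a * b)%N = INR a * INR b.
Proof. by rewrite mulnE mult_INR. Qed.

Lemma INR_expn (a b : nat) : INR (a ^ b)%N = INR a ^ b.
Proof.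
elim: b => [|b IH]; first by rewrite expn0.
by rewrite expnS INR_muln IH.
Qed.

Lemma log2_ge (L N : nat) : (2 ^ L <= N)%N -> (INR L <= log2 (INR N)).
Proof.
move=> h; rewrite /log2.
have h2 := ln2_pos.
have hN : (INR (2 ^ L) <= INR N) by apply: le_INR; apply/leP.
rewrite INR_expn /= in hN.
have hp : (0 < 2 ^ L) by apply: pow_lt; lra.
have := ln_le' hp hN; rewrite ln_pow; last lra.
move=> hl; apply (Rmult_le_reg_r (ln 2)) => //.
rewrite Rmult_assoc Rinv_l; lra.
Qed.

End Reals.


Section RB.
Local Open Scope R_scope.
Variables (n ell : nat) (S : 'I_ell -> {set 'I_n}) (k : nat) (r : R).
Hypothesis hsp : spread k r S.
Hypothesis rpos : 0 < r.

Lemma Ct_bound t : (1 <= t)%N -> INR (Ct S t) <= r ^ (k - t).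
Proof.
move=> ht; rewrite /Ct.
have hr0 : 0 <= r ^ (k - t) by apply: pow_le; lra.
apply: (big_ind (fun x => INR x <= r ^ (k - t))).
- by rewrite /=.
- by move=> a b ha hb; rewrite /maxn; case: ifP.
- move=> D /andP [/eqP hD hD0]; rewrite /cnt -hD; exact: hsp.
Qed.

Variables (m L : nat).
Let M := (m * L)%N.
Let y := 4 * INR M / r.
Hypothesis hy : 0 <= y <= /2.

Lemma TS_bound :
  INR (\sum_(1 <= t < k.+1) Fb S m L t)%N <=
    INR #|{: {ffun 'I_n -> 'I_m * 'I_L}}| * (r ^ k * (2 * y)).
Proof.
set a := INR #|{: {ffun 'I_n -> 'I_m * 'I_L}}|.
have ha : 0 <= a by apply: pos_INR.
apply: Rle_trans (INR_sum_le (G := fun t => a * (r ^ k * y ^ t)) _) _.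
  move=> t /andP [ht1 ht2].
  rewrite /Fb !INR_muln !INR_expn card_prod !card_ord -/M.
  apply: Rmult_le_compat_l => //.
  have hC := Ct_bound ht1.
  have h4 : INR 4 = 4 by simpl; lra.
  rewrite h4.
  have e1 : r ^ k = r ^ (k - t) * r ^ t.
    by rewrite -pow_add; congr (r ^ _); lia.
  have e2 : y * r = 4 * INR M by rewrite /y; field; lra.
  have hM : 0 <= INR M by apply: pos_INR.
  have h4t : 0 <= 4 ^ t * INR M ^ t by apply: Rmult_le_pos; apply: pow_le; lra.
  rewrite e1 Rmult_assoc -Rpow_mult_distr (Rmult_comm r) e2 Rpow_mult_distr.
  rewrite -Rmult_assoc (Rmult_comm (r ^ (k - t))).
  by apply: Rmult_le_compat_l.
rewrite (@rs_scale a (fun t => r ^ k * y ^ t)) rs_scale.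
apply: Rmult_le_compat_l => //.
apply: Rmult_le_compat_l; first by apply: pow_le; lra.
change (rs (fun t => y ^ t) k <= 2 * y). have := rs_geo k hy.
have : 0 <= y ^ k.+1 by apply: pow_le; lra.
lra.
Qed.
End RB.


Section Main.
Local Open Scope R_scope.

Lemma INR_lt' (a b : nat) : INR a < INR b -> (a < b)%N.
Proof. by move=> h; apply/ltP; apply: INR_lt. Qed.

Theorem main_aux :
  exists alpha : R, (1 < alpha) /\
  forall (p k n ell : nat) (S : 'I_ell -> {set 'I_n}),
    (2 <= p)%N -> (1 <= k)%N -> (1 <= n)%N ->
    (forall i, #|S i| = k) ->
    let r := (alpha * INR p * log2 (INR (p * k))) in
    (r ^ k < INR ell) ->
    spread k r S ->
    exists f : 'I_p -> 'I_ell,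
      injective f /\
      (forall a b : 'I_p, a != b -> [disjoint S (f a) & S (f b)]).
Proof.
exists 32; split; first lra.
move=> p k n ell S hp hk hn hS r hr hsp.
pose L := (trunc_log 2 k).+1.
have hkL : (k < 2 ^ L)%N by apply: trunc_log_ltn.
have h2L : (2 ^ L <= p * k)%N.
  rewrite /L expnS; apply: leq_mul => //; exact: trunc_logP.
have hlog := log2_ge h2L.
have hL1 : 1 <= INR L by rewrite /L S_INR; have := pos_INR (trunc_log 2 k); lra.
have hp2 : 2 <= INR p by have := le_INR 2 p (elimT leP hp); simpl; lra.
have rge : 32 * INR p * INR L <= r.
  rewrite /r; apply: Rmult_le_compat_l => //; lra.
have rpos : 0 < r by nra.
pose m := (2 * p)%N.
have hm : INR (m * L) = 2 * INR p * INR L by rewrite INR_muln /m INR_muln /=; lra.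
set y := 4 * INR (m * L) / r.
have hy : 0 <= y <= / 4.
  rewrite /y hm; split.
    apply: Rmult_le_pos; last by apply: Rlt_le; apply: Rinv_0_lt_compat.
    nra.
  apply: (Rmult_le_reg_r r) => //.
  have -> : 4 * (2 * INR p * INR L) / r * r = 4 * (2 * INR p * INR L) by field; lra.
  lra.
have hy2 : 0 <= y <= / 2 by lra.
have hTS := TS_bound hsp rpos hy2.
set TS := (\sum_(1 <= t < k.+1) Fb S m L t)%N in hTS.
set A := INR #|{: {ffun 'I_n -> 'I_m * 'I_L}}| in hTS.
have hcol : forall c : 'I_m,
   (\sum_(chi : {ffun 'I_n -> 'I_m * 'I_L}) (fail S k c chi) * ell <= TS)%N.
  by move=> c; apply: leq_trans (sum_fail S k L c) (sum_dead hS c hkL).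
have hell : (0 < ell)%N.
  rewrite lt0n; apply/eqP => e; rewrite e /= in hr.
  have := pow_lt r k rpos; lra.
have hNS : (\sum_(c : 'I_m) \sum_(chi : {ffun 'I_n -> 'I_m * 'I_L}) (fail S k c chi) * ell
            <= m * TS)%N.
  apply: (@leq_trans (\sum_(c : 'I_m) TS)); first by apply: leq_sum => c _; apply: hcol.
  by rewrite big_const_ord iter_addn_0 mulnC.
have hA1 : 1 <= A.
  rewrite /A card_ffun card_prod !cardT !size_enum_ord INR_expn.
  apply: pow_R1_Rle; rewrite hm; nra.
have hR : INR (\sum_(c : 'I_m) \sum_(chi : {ffun 'I_n -> 'I_m * 'I_L}) (fail S k c chi) * ell)%N
          < INR (p * #|{: {ffun 'I_n -> 'I_m * 'I_L}}| * ell)%N.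
  apply: Rle_lt_trans (le_INR _ _ (elimT leP hNS)) _.
  rewrite !INR_muln -/A.
  have hrk : 0 < r ^ k by apply: pow_lt.
  have h1 : INR TS * 2 <= A * r ^ k.
    rewrite -/y in hTS.
    have h0 : 0 <= A * r ^ k by nra.
    have := Rmult_le_compat_l (A * r ^ k) (4 * y) 1 h0 (ltac:(lra)).
    nra.
  have hr' : A * r ^ k < A * INR ell by nra.
  have h3 : INR TS * 2 < A * INR ell by lra.
  have h4 := Rmult_lt_compat_l (INR p) _ _ (ltac:(lra) : 0 < INR p) h3.
  simpl (INR 2). lra.
have hlt := INR_lt' hR.
have hsum : (\sum_(chi : {ffun 'I_n -> 'I_m * 'I_L}) \sum_(c : 'I_m) (fail S k c chi)
             < p * #|{: {ffun 'I_n -> 'I_m * 'I_L}}|)%N.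
  have e : (\sum_(c : 'I_m) \sum_(chi : {ffun 'I_n -> 'I_m * 'I_L}) (fail S k c chi) * ell
     = (\sum_(chi : {ffun 'I_n -> 'I_m * 'I_L}) \sum_(c : 'I_m) (fail S k c chi)) * ell)%N.
    rewrite exchange_big /= big_distrl /=; apply: eq_bigr => chi _; by rewrite big_distrl.
  by rewrite -(ltn_pmul2r hell) -e.
have [chi hchi] : exists chi : {ffun 'I_n -> 'I_m * 'I_L},
    (\sum_(c : 'I_m) (fail S k c chi) < p)%N.
  case: (pickP (fun chi : {ffun 'I_n -> 'I_m * 'I_L} => (\sum_(c : 'I_m) (fail S k c chi) < p)%N)) => [chi h|h].
    by exists chi.
  have : (\sum_(chi : {ffun 'I_n -> 'I_m * 'I_L}) p <=
          \sum_(chi : {ffun 'I_n -> 'I_m * 'I_L}) \sum_(c : 'I_m) (fail S k c chi))%N.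
    by apply: leq_sum => chi _; move: (h chi) => /= /negbT; rewrite -leqNgt.
  rewrite sum_nat_const => h'.
  have := leq_ltn_trans h' hsum.
  rewrite mulnC (_ : #|(xpredT : pred {ffun 'I_n -> 'I_m * 'I_L})| = #|{: {ffun 'I_n -> 'I_m * 'I_L}}|) ?ltnn //.
pose Succ := [set c : 'I_m | ~~ fail S k c chi].
have hSucc : (p <= #|Succ|)%N.
  have e1 : #|[set c : 'I_m | fail S k c chi]| = (\sum_(c : 'I_m) (fail S k c chi))%N.
    by rewrite -sum1dep_card big_mkcond.
  have e2 : Succ = ~: [set c : 'I_m | fail S k c chi].
    by apply/setP => c; rewrite !inE.
  rewrite e2 cardsCs setCK e1 cardT size_enum_ord; move: hchi; rewrite /m; lia.
pose V (c : 'I_m) := [set x : 'I_n | (chi x).1 == c].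
have hV : forall c, c \in Succ -> exists i, S i \subset V c.
  move=> c; rewrite inE => /forallPn [i]; rewrite /Gc.
  case E: (Gs S k (Wc c chi) L i) => [A0|] // _.
  have [_ hA0 _] := Gs_inv hS E.
  have eA0 : A0 = set0.
    by apply/eqP; rewrite -cards_eq0 -leqn0; rewrite divn_small in hA0.
  have [i' Hi'] := Gs_succ E.
  exists i'; apply/subsetP => x /Hi' [|[j' [_ xW]]].
    by rewrite eA0 inE.
  by move: xW; rewrite /Wc /V !inE => /andP [].
pose cm (a : 'I_p) : 'I_m := enum_val (widen_ord hSucc a).
have cmS : forall a, cm a \in Succ by move=> a; apply: enum_valP.
have cm_inj : injective cm.
  move=> a b /enum_val_inj /(congr1 val) /= e; exact: val_inj.
pose i0 : 'I_ell := Ordinal hell.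
pose f (a : 'I_p) := odflt i0 [pick i | S i \subset V (cm a)].
have hf : forall a, S (f a) \subset V (cm a).
  move=> a; rewrite /f; case: pickP => [i hi //|hnone].
  have [i hi] := hV _ (cmS a); by move: (hnone i); rewrite hi.
have hVd : forall c c', c != c' -> [disjoint V c & V c'].
  move=> c c' hc; rewrite disjoints_subset; apply/subsetP => x.
  rewrite !inE => /eqP ->; exact: hc.
have hdis : forall a b : 'I_p, a != b -> [disjoint S (f a) & S (f b)].
  move=> a b hab; apply: (disjointWl (hf a)); apply: (disjointWr (hf b)).
  apply: hVd; apply: contra hab => /eqP /cm_inj ->; exact: eqxx.
exists f; split => //.
move=> a b e; apply/eqP; apply/negPn/negP => hab.
have := hdis a b hab; rewrite e -setI_eq0 setIid => /eqP h0.
by move: (hS (f b)); rewrite h0 cards0 => h; lia.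
Qed.
End Main.

From mathcomp Require Import all_boot.
From Stdlib Require Import Reals.

Theorem lemma2 :
  exists alpha : R, (1 < alpha)%R /\
  forall (p k n ell : nat) (S : 'I_ell -> {set 'I_n}),
    (2 <= p)%N -> (1 <= k)%N -> (1 <= n)%N ->
    (forall i, #|S i| = k) ->
    let r := (alpha * INR p * log2 (INR (p * k)))%R in
    (r ^ k < INR ell)%R ->
    spread k r S ->
    exists f : 'I_p -> 'I_ell,
      injective f /\
      (forall a b : 'I_p, a != b -> [disjoint S (f a) & S (f b)]).
Proof.
exact: main_aux.
Qed.
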